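(* For each positive integer $n$, let $A_n=\{a_{0n},\dots,a_{nn}\}$ with $(a_{0n},\dots,a_{nn})\in[0,1]^{n+1}$ a minimizer of $$(x_0,\dots,x_n)\mapsto \max_{p\in[0,1]}\sum_{k=0}^n\binom{n}{k}p^k(1-p)^{n-k}|p-x_k|$$ over $[0,1]^{n+1}$. Then the normalized counting measures $\frac{1}{n+1}\sum_{j=0}^n\delta_{a_{jn}}$ converge weak$^*$ to Lebesgue measure $dx$ on $[0,1]$ as $n\to\infty$.
   Context: $\delta_x$ denotes the unit point mass at $x$. Weak$^*$ convergence of measures $\mu_n\to\mu$ on $[0,1]$ means $\int g\,d\mu_n\to\int g\,d\mu$ for all $g\in C[0,1]$. *)

(* Defs.v *)
From HB Require Import structures.
From mathcomp Require Import all_boot all_order all_algebra.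
From mathcomp Require Import all_classical all_reals all_analysis.
Set Implicit Arguments. Unset Strict Implicit. Unset Printing Implicit Defensive.
Import Order.TTheory GRing.Theory Num.Theory.
Import numFieldNormedType.Exports.
Local Open Scope classical_set_scope.
Local Open Scope ring_scope.

Definition bern_dev {R : realType} (n : nat) (x : 'I_n.+1 -> R) (p : R) : R :=
  \sum_(k < n.+1) ('C(n, k))%:R * p ^+ k * (1 - p) ^+ (n - k) * `|p - x k|.

(* max_{p in [0,1]} of the above (the sup is attained by continuity) *)
Definition max_dev {R : realType} (n : nat) (x : 'I_n.+1 -> R) : R :=
  sup [set bern_dev x p | p in `[0, 1]%classic].

Definition in_cube {R : realType} (n : nat) (x : 'I_n.+1 -> R) : Prop :=
  forall k, x k \in `[0, 1]%R.

Definition is_minimizer {R : realType} (n : nat) (x : 'I_n.+1 -> R) : Prop :=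
  in_cube x /\ forall y : 'I_n.+1 -> R, in_cube y -> max_dev x <= max_dev y.

(* Main.v *)
Require Import Defs.
From HB Require Import structures.
From mathcomp Require Import all_boot all_order all_algebra.
From mathcomp Require Import all_classical all_reals all_analysis.
From mathcomp Require Import ring lra.
Import Order.TTheory GRing.Theory Num.Theory.
Import numFieldNormedType.Exports.
Local Open Scope classical_set_scope.
Local Open Scope ring_scope.
Section S.
Variable R : realType.
Definition bb n k (p : R) : R := 'C(n, k)%:R * (p ^+ k * (1 - p) ^+ (n - k)).

Lemma abs_le (t eta : R) : 0 < eta -> `|t| <= eta + t ^+ 2 / eta.
Proof.
move=> e0; rewrite -(real_normK (num_real t)); set a := `|t|.
have a0 : 0 <= a by rewrite normr_ge0.
case: (lerP a eta) => h.
  by apply: (le_trans h); rewrite lerDl divr_ge0 // ?sqr_ge0 // ltW.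
rewrite ler_wpDl ?(ltW e0) // ler_pdivlMr // expr2 ler_wpM2l //; exact: ltW.
Qed.

Lemma bb_ge0 n k p : p \in `[0, 1] -> 0 <= bb n k p.
Proof.
rewrite in_itv /= => /andP[p0 p1].
by rewrite /bb mulr_ge0 ?ler0n // mulr_ge0 // exprn_ge0 // subr_ge0.
Qed.

Lemma bern_devE n (x : 'I_n.+1 -> R) p :
  bern_dev x p = \sum_(k < n.+1) bb n k p * `|p - x k|.
Proof. by apply: eq_bigr => k _; rewrite /bb !mulrA. Qed.


Lemma within_eps (g : R -> R) (A : set R) x : {within A, continuous g} -> A x ->
  forall e, 0 < e -> exists2 d, 0 < d & forall y, A y -> `|x - y| < d -> `|g x - g y| < e.
Proof.
move=> /subspace_continuousP gc Ax e e0.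
have := gc x Ax => /cvgrPdist_lt /(_ e e0).
rewrite /within => /nbhs_ballP [d /= d0 Hd].
exists d => // y Ay xy; apply: (Hd y) => //.

Qed.

Lemma unif_cont01 (g : R -> R) : {within `[0, 1], continuous g} ->
  forall e, 0 < e -> exists2 d, 0 < d & forall x y, x \in `[0, 1] -> y \in `[0, 1] ->
    `|x - y| < d -> `|g x - g y| < e.
Proof.
move=> gc e e0.
have cpt := @segment_compact R 0 1.
move/compact_near_coveringP/near_covering_withinP : cpt => NC.
set P := (fun d x => forall y, `[0, 1]%classic y -> `|x - y| < d -> `|g x - g y| < e).
have HF : \forall d \near (0:R)^'+, `[0, 1]%classic `<=` P d.
  apply: NC => x Ax.
  have [d d0 Hd] := @within_eps g _ x gc Ax (e / 2) ltac:(by rewrite divr_gt0).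
  near=> x' i => /= Ax' y Ay x'y.
  have xx' : `|x - x'| < d / 2 by near: x'; apply: (@near_ball _ _ x (d/2)); rewrite divr_gt0.
  have id2 : i < d / 2 by near: i; apply: nbhs_right_lt; rewrite divr_gt0.
  have d2 : d / 2 < d by rewrite ltr_pdivrMr // ltr_pMr // ltr1n.
  have h1 := Hd x' Ax' (lt_trans xx' d2).
  have h2 : `|g x - g y| < e / 2.
    apply: Hd => //; rewrite (le_lt_trans (ler_distD x' x y)) //.
    by rewrite (splitr d) ltrD // (lt_trans x'y id2).
  rewrite (le_lt_trans (ler_distD (g x) _ _)) // [e in _ < e](splitr e) ltrD //.
  by rewrite distrC.
near (0:R)^'+ => d.
exists d; first by near: d; exact: nbhs_right_gt.
move=> x y x01 y01 xy.
have Px : P d x by apply: (near HF d).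
exact: Px.
Unshelve. all: end_near.
Qed.



Lemma bb_rec n (f : nat -> R) p :
  \sum_(0 <= k < n.+2) bb n.+1 k p * f k =
  p * \sum_(0 <= k < n.+1) bb n k p * f k.+1 + (1 - p) * \sum_(0 <= k < n.+1) bb n k p * f k.
Proof.
rewrite big_nat_recl // [X in _ = _ + (1 - p) * X]big_nat_recl //.
have step i : bb n.+1 i.+1 p * f i.+1 = p * (bb n i p * f i.+1) +
    'C(n, i.+1)%:R * (p ^+ i.+1 * (1 - p) ^+ (n - i)) * f i.+1.
  by rewrite /bb binS natrD subSS exprS; ring.
under eq_bigr do rewrite step.
rewrite big_split /= -big_distrr /= [X in _ + (_ + X) = _]big_nat_recr //=.
rewrite bin_small // mul0r mul0r addr0.
rewrite mulrDr big_distrr /=.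
have E : \sum_(0 <= i < n) 'C(n, i.+1)%:R * (p ^+ i.+1 * (1 - p) ^+ (n - i)) * f i.+1
    = (1 - p) * \sum_(0 <= i < n) bb n i.+1 p * f i.+1.
  rewrite big_distrr; apply: eq_big_nat => i /andP[_ lt_in].
  rewrite /= /bb -(subnSK lt_in) !exprS; ring.
rewrite E /bb !bin0 !subn0 !expr0 exprS; ring.
Qed.

Lemma mom0 n p : \sum_(0 <= k < n.+1) bb n k p = 1.
Proof.
elim: n => [|n IH]; first by rewrite big_nat1 /bb bin0 subnn !expr0 !mulr1.
have H := bb_rec n (fun _ => 1) p.
rewrite /= in H.
have E m : \sum_(0 <= k < m.+1) bb m k p * 1 = \sum_(0 <= k < m.+1) bb m k p.
  by apply: eq_bigr => k _; rewrite mulr1.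
by rewrite -E H !E IH; ring.
Qed.

Lemma mom1 n p : \sum_(0 <= k < n.+1) bb n k p * k%:R = n%:R * p.
Proof.
elim: n => [|n IH]; first by rewrite big_nat1 mulr0 mul0r.
rewrite bb_rec IH.
have -> : \sum_(0 <= k < n.+1) bb n k p * k.+1%:R = n%:R * p + 1.
  under eq_bigr do rewrite -addn1 natrD mulrDr mulr1.
  by rewrite big_split /= IH mom0.
rewrite -addn1 natrD; ring.
Qed.

Lemma mom2 n p : \sum_(0 <= k < n.+1) bb n k p * k%:R ^+ 2 =
  n%:R * p + n%:R * (n%:R - 1) * p ^+ 2.
Proof.
elim: n => [|n IH]; first by rewrite big_nat1 expr0n mulr0 !mul0r addr0.
rewrite bb_rec IH.
have -> : \sum_(0 <= k < n.+1) bb n k p * k.+1%:R ^+ 2 =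
    (n%:R * p + n%:R * (n%:R - 1) * p ^+ 2) + 2 * (n%:R * p) + 1.
  under eq_bigr do rewrite -addn1 natrD sqrrD mulr1 expr1n !mulrDr.
  rewrite !big_split /= IH mom1.
  have -> : \sum_(0 <= i < n.+1) bb n i p * 1 = 1.
    by rewrite -[RHS](mom0 n p); apply: eq_bigr => k _; rewrite mulr1.
  ring.
rewrite -addn1 natrD; ring.
Qed.

Lemma var_bb n p : (0 < n)%N ->
  \sum_(0 <= k < n.+1) bb n k p * (p - k%:R / n%:R) ^+ 2 = p * (1 - p) / n%:R.
Proof.
move=> n0.
have nz : n%:R != 0 :> R by rewrite pnatr_eq0 -lt0n.
have E k : bb n k p * (p - k%:R / n%:R) ^+ 2 =
  p ^+ 2 * bb n k p - (2 * p / n%:R) * (bb n k p * k%:R) +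
  (n%:R ^+ 2)^-1 * (bb n k p * k%:R ^+ 2).
  by field.
under eq_bigr do rewrite E.
rewrite big_split big_split /= -!big_distrr /= sumrN -big_distrr /= mom0 mom1 mom2.
by field.
Qed.


Lemma grid_bound n p eta : (0 < n)%N -> p \in `[0, 1] -> 0 < eta ->
  \sum_(k < n.+1) bb n k p * `|p - (k : nat)%:R / n%:R| <= eta + (eta * n%:R)^-1.
Proof.
move=> n0 p01 e0.
rewrite -(big_mkord xpredT (fun k => bb n k p * `|p - k%:R / n%:R|)).
apply: (@le_trans _ _ (\sum_(0 <= k < n.+1) bb n k p * (eta + (p - k%:R / n%:R) ^+ 2 / eta))).
  by apply: ler_sum => k _; rewrite ler_wpM2l ?bb_ge0 // abs_le.
have E k : bb n k p * (eta + (p - k%:R / n%:R) ^+ 2 / eta) =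
    eta * bb n k p + eta^-1 * (bb n k p * (p - k%:R / n%:R) ^+ 2) by ring.
under eq_bigr do rewrite E.
rewrite big_split /= -!big_distrr /= mom0 var_bb // mulr1 lerD2l invfM.
have nge0 : 0 <= (n%:R : R)^-1 by rewrite invr_ge0 ler0n.
rewrite mulrA ler_wpM2r // ler_piMr ?invr_ge0 ?(ltW e0) //.
move: p01; rewrite in_itv /= => /andP[p0 p1].
by rewrite mulr_ile1 // ?subr_ge0 // lerBlDr lerDl.
Qed.

Lemma bern_dev_le1 n (x : 'I_n.+1 -> R) p : in_cube x -> p \in `[0, 1] -> bern_dev x p <= 1.
Proof.
move=> xc p01; rewrite bern_devE -(mom0 n p) big_mkord.
apply: ler_sum => k _; rewrite ler_piMr ?bb_ge0 //.
move: p01 (xc k); rewrite !in_itv /= => /andP[p0 p1] /andP[x0 x1].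
by rewrite ler_norml; apply/andP; split; lra.
Qed.

Lemma le_max_dev n (x : 'I_n.+1 -> R) p : in_cube x -> p \in `[0, 1] ->
  bern_dev x p <= max_dev x.
Proof.
move=> xc p01; rewrite /max_dev; apply: ub_le_sup; last by exists p.
by exists 1 => y [q q01 <-]; apply: bern_dev_le1.
Qed.

Lemma max_dev_le n (x : 'I_n.+1 -> R) B :
  (forall p, p \in `[0, 1] -> bern_dev x p <= B) -> max_dev x <= B.
Proof.
move=> H; apply: ge_sup.
  by exists (bern_dev x 0), 0 => //; rewrite /= in_itv /= lexx ler01.
by move=> y [q q01 <-]; apply: H.
Qed.

Local Notation mu := (@lebesgue_measure R).

Lemma integrable_bb n k c : mu.-integrable `[0, 1] (EFin \o (fun x => c * bb n k x)).
Proof.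
apply: continuous_compact_integrable; first exact: segment_compact.
apply: continuous_in_subspaceT => x _.
apply: cvgM; first exact: cvg_cst.
apply: cvgM; first exact: cvg_cst.
exact: (@continuous_XMonemX R k (n - k)).
Qed.

Lemma int_bb n k : (k <= n)%N -> \int[mu]_(x in `[0, 1]) bb n k x = n.+1%:R^-1.
Proof.
move=> kn.
rewrite /bb RintegralZl //; last exact: (@integrable_XMonemX R k (n - k)).
have -> : (\int[mu]_(x in `[0, 1]) (x ^+ k * (1 - x) ^+ (n - k))) = beta_fun k.+1 (n - k).+1.
  by rewrite /beta_fun -Rintegral_mkcond.
rewrite beta_fun_fact subnKC // mulrA -natrM bin_fact // factS natrM invfM.
have nz : n`!%:R != 0 :> R by rewrite pnatr_eq0 -lt0n fact_gt0.
by rewrite mulrCA divff // mulr1.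
Qed.

Lemma Rint_sum (I : Type) (s : seq I) (F : I -> R -> R) :
  (forall i, mu.-integrable `[0, 1] (EFin \o F i)) ->
  mu.-integrable `[0, 1] (EFin \o (fun x => \sum_(i <- s) F i x)) /\
  \int[mu]_(x in `[0, 1]) (\sum_(i <- s) F i x) = \sum_(i <- s) \int[mu]_(x in `[0, 1]) F i x.
Proof.
move=> Fi; elim: s => [|i s [IHi IHe]].
  have Z : mu.-integrable `[0, 1] (EFin \o (fun _ : R => 0 : R)).
    apply: continuous_compact_integrable; first exact: segment_compact.
    by apply: continuous_in_subspaceT => x _; exact: cvg_cst.
  split.
    apply: (eq_integrable _ _ _ _ Z) => // x _ /=; by rewrite big_nil.
  have -> : \int[mu]_(x in `[0, 1]) (\sum_(i <- [::]) F i x) = \int[mu]_(x in `[0, 1]) (0 : R).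
    by apply: eq_Rintegral => x _; rewrite big_nil.
  by rewrite big_nil Rintegral_cst ?mul0r.
split.
  apply: (eq_integrable _ _ _ _ (integrableD _ (Fi i) IHi)) => // x _ /=.
  by rewrite big_cons.
rewrite big_cons -IHe -RintegralD //.
by apply: eq_Rintegral => x _; rewrite big_cons.
Qed.

Lemma int_bound (h : R -> R) B : mu.-integrable `[0, 1] (EFin \o h) ->
  (forall p, p \in `[0, 1] -> `|h p| <= B) -> `|\int[mu]_(x in `[0, 1]) h x| <= B.
Proof.
move=> hi hB.
apply: (le_trans (le_normr_Rintegral _ hi)) => //.
have cI : mu.-integrable `[0, 1] (EFin \o (fun _ : R => B)).
  apply: continuous_compact_integrable; first exact: segment_compact.
  by apply: continuous_in_subspaceT => x _; exact: cvg_cst.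
apply: le_trans (le_Rintegral _ (integrable_norm hi) cI _) _ => //.
by rewrite Rintegral_cst //= lebesgue_measure_itv /= lte01 EFinN sube0 /= mulr1.
Qed.

Lemma integrable_bb1 n k : mu.-integrable `[0, 1] (EFin \o bb n k).
Proof.
apply: (eq_integrable _ _ _ _ (integrable_bb n k 1)) => // x _ /=.
by rewrite mul1r.
Qed.

Lemma S_int n (y : 'I_n.+1 -> R) :
  n.+1%:R^-1 * \sum_(j < n.+1) y j =
  \int[mu]_(x in `[0, 1]) (\sum_(j < n.+1) y j * bb n j x).
Proof.
have [_ ->] := @Rint_sum _ (index_enum 'I_n.+1) (fun j x => y j * bb n j x)
  (fun j => integrable_bb n j (y j)).
rewrite mulr_sumr; apply: eq_bigr => j _.
rewrite RintegralZl //; last exact: integrable_bb1.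
rewrite int_bb; last by rewrite -ltnS ltn_ord.
by rewrite mulrC.
Qed.

Lemma key_pt n (x : 'I_n.+1 -> R) (g : R -> R) M d e p :
  in_cube x -> 0 < d -> 0 <= e ->
  (forall y, y \in `[0, 1] -> `|g y| <= M) ->
  (forall u v, u \in `[0, 1] -> v \in `[0, 1] -> `|u - v| < d -> `|g u - g v| < e) ->
  p \in `[0, 1] ->
  `|\sum_(j < n.+1) g (x j) * bb n j p - g p| <= e + (2 * M / d) * max_dev x.
Proof.
move=> xc d0 e0 hM hU p01.
have M0 : 0 <= M by apply: le_trans (hM p p01); exact: normr_ge0.
have K0 : 0 <= 2 * M / d by rewrite divr_ge0 ?mulr_ge0 // ltW.
have S1 : \sum_(j < n.+1) bb n j p = 1 by rewrite -(mom0 n p) big_mkord.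
have -> : \sum_(j < n.+1) g (x j) * bb n j p - g p =
    \sum_(j < n.+1) bb n j p * (g (x j) - g p).
  rewrite -[X in _ - X]mul1r -S1 mulr_suml -sumrB; apply: eq_bigr => j _; ring.
apply: le_trans (ler_norm_sum _ _ _) _.
apply: (@le_trans _ _ (\sum_(j < n.+1) bb n j p * (e + 2 * M / d * `|p - x j|))).
  apply: ler_sum => j _; rewrite normrM ger0_norm ?bb_ge0 // ler_wpM2l ?bb_ge0 //.
  have xj := xc j.
  case: (ltrP `|p - x j| d) => h.
    have := hU p (x j) p01 xj h; rewrite distrC => /ltW H.
    by apply: le_trans H _; rewrite lerDl mulr_ge0.
  have H1 : `|g (x j) - g p| <= 2 * M.
    have := ler_normB (g (x j)) (g p); have := hM _ xj; have := hM _ p01; lra.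
  have H2 : 2 * M <= 2 * M / d * `|p - x j|.
    have H3 : 1 <= `|p - x j| / d by rewrite ler_pdivlMr // mul1r.
    by rewrite -mulrA ler_peMr ?mulr_ge0 // mulrC.
  by apply: le_trans H1 (le_trans H2 _); rewrite lerDr.
under eq_bigr do rewrite mulrDr mulrCA.
rewrite big_split /= -!big_distrr /=.
rewrite -big_distrl /= S1 mul1r -bern_devE lerD2l ler_wpM2l //.
exact: le_max_dev.
Qed.

Lemma grid_cube n : (0 < n)%N -> in_cube (fun k : 'I_n.+1 => (k : nat)%:R / n%:R : R).
Proof.
move=> n0 k; rewrite in_itv /= divr_ge0 ?ler0n //=.
by rewrite ler_pdivrMr ?ltr0n // mul1r ler_nat -ltnS ltn_ord.
Qed.

Lemma max_dev_small n (x : 'I_n.+1 -> R) eta : (0 < n)%N -> is_minimizer x -> 0 < eta ->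
  max_dev x <= eta + (eta * n%:R)^-1.
Proof.
move=> n0 [xc Hmin] e0; apply: (le_trans (Hmin _ (@grid_cube n n0))).
apply: max_dev_le => p p01; rewrite bern_devE; exact: grid_bound.
Qed.
End S.

Theorem corollary3p5 (R : realType) (a : forall n : nat, 'I_n.+1 -> R)
  (ha : forall n : nat, (0 < n)%N -> is_minimizer (a n)) :
  forall g : R -> R, {within `[0, 1]%classic, continuous g} ->
    (fun n : nat => (n.+1%:R)^-1 * \sum_(j < n.+1) g (a n j)) @ \oo -->
      Rintegral (@lebesgue_measure R) `[0, 1]%classic g.
Proof.
move=> g gc.
have gint : (@lebesgue_measure R).-integrable `[0, 1] (EFin \o g).
  by apply: continuous_compact_integrable => //; exact: segment_compact.
have [c1 c1I Hmax] := EVT_max ler01 gc.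
have [c2 c2I Hmin] := EVT_min ler01 gc.
set M := `|g c1| + `|g c2|.
have hM : forall y, y \in `[0, 1] -> `|g y| <= M.
  move=> y yI; have := Hmax y yI; have := Hmin y yI.
  have h1 := ler_norm (g c1); have h2 := ler_norm (- g c2); rewrite normrN in h2.
  have h3 := normr_ge0 (g c1); have h4 := normr_ge0 (g c2).
  rewrite ler_norml /M => ? ?; apply/andP; split; lra.
have M0 : 0 <= M by rewrite addr_ge0.
apply/cvgrPdist_lt => eps eps0.
have e2 : 0 < eps / 2 by rewrite divr_gt0.
have [d d0 hU] := @unif_cont01 R g gc _ e2.
set K := 2 * M / d.
have K0 : 0 <= K by rewrite divr_ge0 ?mulr_ge0 // ltW.
set eta := eps / 8 / (K + 1).
have eta0 : 0 < eta by rewrite !divr_gt0 // ltr_wpDl.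
have HK1 : K * eta <= eps / 8.
  rewrite [X in X <= _](_ : _ = eps / 8 * (K / (K + 1))); last by rewrite /eta; ring.
  rewrite ler_piMr ?divr_ge0 ?ltW //.
  by rewrite ltr_pdivrMr ?ltr_wpDl // mul1r ltrDl ltr01.
set C := K / (eta * (eps / 8)).
exists (Num.truncn C).+1 => // n /= hn.
have n0 : (0 < n)%N by apply: leq_trans hn.
have hn' : C < n%:R.
  by apply: (lt_le_trans (Num.Theory.truncnS_gt C)); rewrite ler_nat.
have HK2 : K * (eta * n%:R)^-1 <= eps / 8.
  have e8 : 0 < eps / 8 by rewrite divr_gt0.
  rewrite ltr_pdivrMr ?(mulr_gt0 eta0 e8) // in hn'.
  rewrite ler_pdivrMr ?(mulr_gt0 eta0) ?ltr0n //.
  have -> : eps / 8 * (eta * n%:R) = n%:R * (eta * (eps / 8)) by ring.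
  exact: ltW.
rewrite (@S_int R n (fun j => g (a n j))).
have [Pint _] := @Rint_sum R _ (index_enum 'I_n.+1) (fun j x => g (a n j) * @bb R n j x)
  (fun j => @integrable_bb R n j (g (a n j))).
rewrite distrC -RintegralB //.
have hint : (@lebesgue_measure R).-integrable `[0, 1]
    (EFin \o (fun x => \sum_(j < n.+1) g (a n j) * bb R n j x - g x)).
  by apply: (eq_integrable _ _ _ _ (integrableB _ Pint gint)) => // x _ /=.
have IB := @int_bound R _ _ hint (fun p p01 => @key_pt R n (a n) g M d (eps / 2) p (ha n n0).1 d0 (ltW e2) hM hU p01).
apply: (le_lt_trans IB).
have Hm := ler_wpM2l K0 (@max_dev_small R n (a n) eta n0 (ha n n0) eta0).
rewrite mulrDr in Hm.
rewrite -/K.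
lra.
Qed.
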